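(* Let $n\geq 2$, $1\leq j\leq n$ and $1\leq k\leq n-1$. Let $p_{n,k}(j)$ be the probability that the value $j$ is a $k$-peak of a uniformly random permutation in $\mathfrak{S}_n$. Then $$p_{n,k}(j)=\begin{cases}0 & \text{if } j\leq k,\\[2pt] \dfrac{(j-k)(j-k+1)}{(n-k)(n-k+1)} & \text{if } j>k.\end{cases}$$
   Context: $\mathfrak{S}_n$ is the set of permutations $w=w_1\cdots w_n$ of $\{1,\dots,n\}$. A section of $w$ is a consecutive block $w_s\cdots w_t$ ($s\le t$). A section $w_s\cdots w_t$ is a $k$-up if $s<t$ and $w_t-w_s\geq k$, and a $k$-down if $s<t$ and $w_s-w_t\geq k$; a $k$-up/$k$-down ''in'' $w_a\cdots w_b$ means one $w_s\cdots w_t$ with $a\le s<t\le b$. A section $w_i\cdots w_j$ ($i<j$) is $k$-ascending if $w_i=\min\{w_i,\dots,w_j\}$, $w_j=\max\{w_i,\dots,w_j\}$, $w_j-w_i\geq k$, and there is no $k$-down in it; it is $k$-descending if $w_i=\max$, $w_j=\min$ of $\{w_i,\dots,w_j\}$, $w_i-w_j\geq k$, and there is no $k$-up in it. Such a section is maximal if not contained in another section of the same type. An entry $w_i$ is a $k$-peak of $w$ if it is the last entry of a maximal $k$-ascending section or the first entry of a maximal $k$-descending section; ''the value $j$ is a $k$-peak'' means the entry $w_i=j$ is a $k$-peak. *)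

(* Defs.v *)
From HB Require Import structures.
From mathcomp Require Import all_boot all_order all_algebra.
From mathcomp Require Import perm.
Set Implicit Arguments. Unset Strict Implicit. Unset Printing Implicit Defensive.

(* A permutation w = w_1 ... w_n of {1..n} is represented by s : seq nat
   (positions 0-indexed: w_{i+1} = nth 0 s i).  *)

Section KPeaks.
Variable (k : nat) (s : seq nat).
Local Notation w i := (nth 0 s i).
Local Notation n := (size s).

Definition kup_in (a b : nat) : bool :=
  [exists x : 'I_n, [exists y : 'I_n,
     [&& a <= x, x < y, y <= b & w x + k <= w y]]].

Definition kdown_in (a b : nat) : bool :=
  [exists x : 'I_n, [exists y : 'I_n,
     [&& a <= x, x < y, y <= b & w y + k <= w x]]].

Definition is_min_of (p i j : nat) : bool :=
  all (fun x => w p <= w x) (index_iota i j.+1).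
Definition is_max_of (p i j : nat) : bool :=
  all (fun x => w x <= w p) (index_iota i j.+1).

Definition kascending (i j : nat) : bool :=
  [&& i < j, j < n, is_min_of i i j, is_max_of j i j,
      w i + k <= w j & ~~ kdown_in i j].

Definition kdescending (i j : nat) : bool :=
  [&& i < j, j < n, is_max_of i i j, is_min_of j i j,
      w j + k <= w i & ~~ kup_in i j].

Definition max_kascending (i j : nat) : bool :=
  kascending i j &&
  ~~ [exists i' : 'I_n, [exists j' : 'I_n,
        [&& i' <= i, j <= j', ((i' : nat), (j' : nat)) != (i, j)
          & kascending i' j']]].

Definition max_kdescending (i j : nat) : bool :=
  kdescending i j &&
  ~~ [exists i' : 'I_n, [exists j' : 'I_n,
        [&& i' <= i, j <= j', ((i' : nat), (j' : nat)) != (i, j)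
          & kdescending i' j']]].

Definition kpeak_pos (p : nat) : bool :=
  [exists i : 'I_n, max_kascending i p] ||
  [exists j : 'I_n, max_kdescending p j].

Definition kpeak_value (v : nat) : bool :=
  [exists p : 'I_n, (w p == v) && kpeak_pos p].

End KPeaks.

Definition word {n : nat} (w : 'S_n) : seq nat :=
  [seq (w i).+1 | i <- enum 'I_n].

Definition p_peak (n k j : nat) : rat :=
  (#|[set w : 'S_n | kpeak_value k (word w) j]|%:R / #|{perm 'I_n}|%:R)%R.

(* Main.v *)
Require Import Defs.
From mathcomp Require Import all_boot all_order all_algebra.
From mathcomp Require Import perm.
From mathcomp Require Import zify.
Set Implicit Arguments. Unset Strict Implicit. Unset Printing Implicit Defensive.

Module B.

Lemma count_sum (T : Type) (a : pred T) r : count a r = \sum_(x <- r) (a x : nat).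
Proof. by elim: r => [|x r IH]; rewrite ?big_nil ?big_cons //= IH. Qed.

Lemma sum_const_seq (T : Type) (r : seq T) c : \sum_(x <- r) c = size r * c.
Proof. by rewrite big_const_seq count_predT iter_addn_0 mulnC. Qed.

Section Ins.
Variable T : eqType.
Definition ins (i : nat) (x : T) (t : seq T) := take i t ++ x :: drop i t.

Lemma perm_ins i x t : perm_eq (ins i x t) (x :: t).
Proof.
rewrite /ins -[x :: drop i t]cat1s.
by rewrite perm_catCA /= cat_take_drop.
Qed.

Lemma index_ins i x t : x \notin t -> i <= size t -> index x (ins i x t) = i.
Proof.
move=> xt it; rewrite /ins index_pivot ?size_takel //.
by apply: contra xt; apply: mem_take.
Qed.

Lemma drop_pivot (A B : seq T) x : drop (size A).+1 (A ++ x :: B) = B.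
Proof. by rewrite drop_cat ltnNge leqnSn /= subSnn /= drop0. Qed.

Lemma rem_pivot (A B : seq T) x : x \notin A -> rem x (A ++ x :: B) = A ++ B.
Proof. by move=> xA; rewrite remE take_pivot // index_pivot // drop_pivot. Qed.

Lemma rem_ins i x t : x \notin t -> i <= size t -> rem x (ins i x t) = t.
Proof.
move=> xt it; rewrite /ins rem_pivot ?cat_take_drop //.
by apply: contra xt; apply: mem_take.
Qed.

Lemma sum_perms_cons (x : T) s (F : seq T -> nat) : x \notin s -> uniq s ->
  \sum_(t <- permutations (x :: s)) F t =
  \sum_(t <- permutations s) \sum_(i <- iota 0 (size s).+1) F (ins i x t).
Proof.
move=> xs us.
rewrite (perm_big [seq ins i x t | t <- permutations s, i <- iota 0 (size s).+1]).
  by rewrite big_allpairs_dep.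
apply: uniq_perm; first exact: permutations_uniq.
  apply: allpairs_uniq; [exact: permutations_uniq | exact: iota_uniq|].
  move=> [t1' i1'] [t2' i2'] H1 H2 /= E.
  case/allpairsP: H1 => [[a1 b1] [h1 h1' [e1 e2]]]; subst a1 b1.
  case/allpairsP: H2 => [[a2 b2] [h2 h2' [e3 e4]]]; subst a2 b2.
  have sz1 : size t1' = size s by apply: perm_size; rewrite -mem_permutations.
  have sz2 : size t2' = size s by apply: perm_size; rewrite -mem_permutations.
  have x1 : x \notin t1' by rewrite (perm_mem (_ : perm_eq t1' s)) // -mem_permutations.
  have x2 : x \notin t2' by rewrite (perm_mem (_ : perm_eq t2' s)) // -mem_permutations.
  move: h1' h2'; rewrite !mem_iota !add0n /= => l1 l2.
  have ei : i1' = i2'.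
    by rewrite -(index_ins x1 (_ : i1' <= size t1')) ?E ?index_ins //; lia.
  subst i2'; congr (_, _).
  by rewrite -(rem_ins x1 (_ : i1' <= size t1')) ?E ?rem_ins //; lia.
move=> t; rewrite mem_permutations; apply/idP/allpairsP.
  move=> pt.
  have xt : x \in t by rewrite (perm_mem pt) mem_head.
  exists (rem x t, index x t); split => /=.
  - rewrite mem_permutations.
    have := perm_to_rem xt; rewrite perm_sym => h.
    by rewrite -(perm_cons x) (perm_trans h pt).
  - have := index_mem x t; rewrite xt (perm_size pt) /=.
    case: (index x t) => [|m] //= hm; rewrite in_cons mem_iota /=; lia.
  - rewrite remE /ins.
    have ls : index x t <= size t by apply: ltnW; rewrite index_mem.
    rewrite take_size_cat ?size_takel //.
    rewrite drop_size_cat ?size_takel //.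
    rewrite -{2}(nth_index x xt) -drop_nth ?index_mem //.
    by rewrite cat_take_drop.
move=> [[t' i] [/= pt _ ->]].
rewrite (perm_trans (perm_ins _ _ _)) // perm_cons -mem_permutations //.
Qed.

End Ins.

End B.
Import B.

Module B2.

Section Cond.
Variables (k j : nat).
Hypothesis k_gt0 : 0 < k.

Definition small v := v + k <= j.
Definition large v := j < v.

Fixpoint okR (L : seq nat) : bool :=
  if L is x :: L' then (if small x then true else if large x then false else okR L')
  else true.

Definition cnd (s : seq nat) :=
  let P := index j s in [&& okR (rev (take P s)), okR (drop P.+1 s) & has small s].

Lemma small_j : small j = false.
Proof. rewrite /small; lia. Qed.

Lemma cnd_cat A B : j \notin A ->
  cnd (A ++ j :: B) = [&& okR (rev A), okR B & has small (A ++ j :: B)].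
Proof. by move=> jA; rewrite /cnd take_pivot // index_pivot // drop_pivot. Qed.

Lemma okR_neutral L1 L2 x : ~~ small x -> ~~ large x ->
  okR (L1 ++ x :: L2) = okR (L1 ++ L2).
Proof.
move=> sx lx; elim: L1 => [|y L1 IH] /=; first by rewrite (negbTE sx) (negbTE lx).
by rewrite IH.
Qed.

Lemma split_first (L : seq nat) : j \in L -> exists A B, L = A ++ j :: B /\ j \notin A.
Proof.
move=> jL; exists (take (index j L) L), (drop (index j L).+1 L); split.
  have h := drop_nth j (_ : index j L < size L); rewrite nth_index // in h.
  by rewrite -h ?cat_take_drop // index_mem.
by rewrite in_take // ltnn.
Qed.

Lemma cnd_neutral L1 L2 x : ~~ small x -> ~~ large x -> x != j ->
  j \in L1 ++ L2 -> cnd (L1 ++ x :: L2) = cnd (L1 ++ L2).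
Proof.
move=> sx lx xj; rewrite mem_cat; case: (boolP (j \in L1)) => [jL1 _ | jL1 /= jL2].
  have [A [B [-> jA]]] := split_first jL1.
  rewrite -!catA !cat_cons !cnd_cat // okR_neutral //.
  by rewrite !has_cat /= !has_cat /= (negbTE sx).
have [A [B [-> jA]]] := split_first jL2.
have e1 : L1 ++ x :: A ++ j :: B = (L1 ++ x :: A) ++ j :: B by rewrite -catA.
have e2 : L1 ++ A ++ j :: B = (L1 ++ A) ++ j :: B by rewrite -catA.
rewrite e1 e2 !cnd_cat; last 2 first.
- by rewrite mem_cat negb_or jL1.
- by rewrite mem_cat /= in_cons (negbTE jL1) /= eq_sym (negbTE xj).
rewrite rev_cat rev_cons cat_rcons okR_neutral // -rev_cat.
by rewrite !has_cat /= (negbTE sx).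
Qed.

Lemma count_neutral x s : x \notin s -> uniq s -> ~~ small x -> ~~ large x -> x != j ->
  j \in s -> count cnd (permutations (x :: s)) = (size s).+1 * count cnd (permutations s).
Proof.
move=> xs us sx lx xj js.
rewrite !count_sum sum_perms_cons // big_distrr /=.
rewrite big_seq_cond [RHS]big_seq_cond; apply: eq_bigr => t /andP [].
rewrite mem_permutations => pt _.
rewrite (eq_bigr (fun _ => (cnd t : nat))); first by rewrite sum_const_seq /= size_iota.
move=> i _; rewrite /ins cnd_neutral // ?cat_take_drop //.
by rewrite (perm_mem pt).
Qed.

Fixpoint gaps (pf : bool) (t : seq nat) : nat :=
  if t is y :: t' then (pf && small y) + gaps (small y) t' else pf.

Lemma iotaS0 n : iota 0 n.+1 = 0 :: map succn (iota 0 n).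
Proof. by rewrite /= -[1]/(1 + 0) iotaDl. Qed.

Lemma count_iotaS0 (a : pred nat) n :
  count a (iota 0 n.+1) = a 0 + count (fun i => a i.+1) (iota 0 n).
Proof. by rewrite iotaS0 /= count_map. Qed.

Lemma count_ins_j t R : all (fun v => small v || large v) t ->
  count (fun i => okR (rev (take i t) ++ R) && okR (drop i t)) (iota 0 (size t).+1)
  = gaps (okR R) t.
Proof.
elim: t R => [|y t IH] R; first by rewrite /= addn0 andbT.
case/andP => ry rt.
rewrite count_iotaS0.
rewrite (eq_count (a2 := fun i => okR (rev (take i t) ++ y :: R) && okR (drop i t))); last first.
  by move=> i /=; rewrite rev_cons cat_rcons.
rewrite IH //=.
by case: (small y) ry => //= ->.
Qed.

Lemma sum_gaps_ins x pf t :
  \sum_(i <- iota 0 (size t).+1) gaps pf (ins i x t) =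
  size t * gaps pf t + small x * (pf + 2 * count small t + 1).
Proof.
elim: t pf => [|y t IH] pf.
  by rewrite /= big_cons big_nil /ins /=; case: pf; case: (small x).
rewrite iotaS0 big_cons big_map.
rewrite (eq_bigr (fun i => (pf && small y) + gaps (small y) (ins i x t))); last by [].
rewrite big_split sum_const_seq size_iota IH /ins /=.
case: pf; case: (small x); case: (small y) => /=; lia.
Qed.

Definition G (L : seq nat) := \sum_(t <- permutations L) gaps true t.

Lemma G_closed L : uniq L ->
  size L * G L = count small L * (count small L).+1 * (size L)`!.
Proof.
elim: L => [|x L IH] /=; first by rewrite mul0n.
move=> /andP [xL uL].
have -> : G (x :: L) = size L * G L + small x * (2 * count small L + 2) * (size L)`!.
  rewrite /G sum_perms_cons //.
  rewrite big_seq (eq_bigr (fun t => size L * gaps true t + small x * (2 * count small L + 2))).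
    rewrite big_split /= -big_distrr /= -!big_seq sum_const_seq size_permutations //; by rewrite [_`! * _]mulnC.
  move=> t; rewrite mem_permutations => pt.
  rewrite -(perm_size pt) sum_gaps_ins ((seq.permP pt) small) /=; lia.
rewrite mulnDr IH // factS.
case: (small x) => /=; nia.
Qed.

End Cond.

End B2.
Import B2.

Module B3.

Section Top.
Variables (k j : nat).
Hypothesis k_gt0 : 0 < k.
Local Notation small := (small k j).
Local Notation large := (large j).
Local Notation cnd := (cnd k j).
Local Notation okR := (okR k j).

Lemma count_j SL : j \notin SL -> uniq SL -> all (fun v => small v || large v) SL ->
  has small SL -> count cnd (permutations (j :: SL)) = G k j SL.
Proof.
move=> jSL uSL rSL hSL.
rewrite count_sum sum_perms_cons // /G big_seq [RHS]big_seq; apply: eq_bigr => t.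
rewrite mem_permutations => pt.
have jt : j \notin t by rewrite (perm_mem pt).
rewrite -(perm_size pt) -count_sum.
rewrite -(@count_ins_j k j t [::]) ?(perm_all _ pt) //.
apply: eq_count => i; rewrite /ins cnd_cat; last by apply: contra jt; apply: mem_take.
rewrite cats0 has_cat /= small_j // -has_cat cat_take_drop (perm_has _ pt) hSL.
by rewrite andbT.
Qed.

Lemma neut_iter Nt T : uniq (Nt ++ T) ->
  all (fun v => ~~ small v && ~~ large v && (v != j)) Nt -> j \in T ->
  count cnd (permutations (Nt ++ T)) * (size T)`! =
  (size (Nt ++ T))`! * count cnd (permutations T).
Proof.
elim: Nt => [|x Nt IH] //=; first by rewrite mulnC.
case/andP => xN uN /andP [/andP [/andP [sx lx] xj] aN] jT.
rewrite count_neutral // ?IH // ?mem_cat ?jT ?orbT //.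
by rewrite -mulnA IH // factS mulnA.
Qed.

Lemma count_iota (p : pred nat) n :
  count p (iota 1 n.+1) = count p (iota 1 n) + p n.+1.
Proof. by rewrite -[n.+1]addn1 iotaD count_cat /= addn0 (addnC 1 n). Qed.

Lemma count_small_iota n : count small (iota 1 n) = minn n (j - k).
Proof.
elim: n => [|n IH]; first by rewrite /= min0n.
rewrite count_iota IH /B2.small.
case: (leqP (n.+1 + k) j) => h /=; lia.
Qed.

Lemma count_rel_iota n : j <= n ->
  count (fun v => small v || large v) (iota 1 n) = minn n (j - k) + (n - j).
Proof.
elim: n => [|n IH] //; first by move=> ?; rewrite /= min0n.
move=> hj; rewrite count_iota.
case: (ltnP j n.+1) => h.
  rewrite IH; last lia.
  rewrite /B2.small /B2.large; case: (leqP (n.+1 + k) j) => h2 /=; lia.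
have e : j = n.+1 by lia.
have -> : count (fun v => small v || large v) (iota 1 n) = count small (iota 1 n).
  apply: eq_in_count => v; rewrite mem_iota /B2.large => hv.
  have -> : (j < v) = false by lia.
  by rewrite orbF.
rewrite count_small_iota /B2.small /B2.large; case: (leqP (n.+1 + k) j) => h2 /=; lia.
Qed.

Definition Neut n := [seq v <- iota 1 n | ~~ small v && ~~ large v && (v != j)].
Definition SL n := [seq v <- iota 1 n | small v || large v].

Lemma perm_split n : 1 <= j <= n -> perm_eq (iota 1 n) (Neut n ++ j :: SL n).
Proof.
move=> hj; apply: uniq_perm; first exact: iota_uniq.
  rewrite cat_uniq /= !filter_uniq ?iota_uniq //= mem_filter small_j // /B2.large ltnn /= andbT negb_or.
  rewrite /Neut /SL eqxx /=; apply/andP; split.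
    apply/hasPn => v; rewrite mem_filter => /andP [hv _]; rewrite mem_filter.
    by case: (small v) hv => //=; case: (large v).
  by rewrite mem_filter small_j // /B2.large ltnn.
move=> v; rewrite /Neut /SL mem_cat in_cons !mem_filter.
case: (eqVneq v j) => [->|vj] /=; first by rewrite mem_iota orbT; lia.
by case: (small v); case: (large v) => /=; rewrite ?andbF ?orbF.
Qed.

Lemma main_count n : k < j <= n ->
  count cnd (permutations (iota 1 n)) * ((n - k) * (n - k).+1) = (j - k) * (j - k).+1 * n`!.
Proof.
move=> hj.
have hj1 : 1 <= j <= n by lia.
have ps := perm_split hj1.
have ui : uniq (Neut n ++ j :: SL n) by rewrite -(perm_uniq ps) iota_uniq.
rewrite (seq.permP (perm_permutations ps)).
have szSL : size (SL n) = n - k.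
  rewrite size_filter count_rel_iota; lia.
have csSL : count small (SL n) = j - k.
  rewrite count_filter (eq_count (a2 := small)) ?count_small_iota; first lia.
  by move=> v /=; case: (small v).
have hn := neut_iter ui (filter_all _ _) (mem_head _ _).
have sz : size (Neut n ++ j :: SL n) = n by rewrite -(perm_size ps) size_iota.
rewrite sz in hn.
move: ui; rewrite cat_uniq => /and3P [_ _ /= /andP [jSL uSL]].
rewrite count_j // ?filter_all // in hn; last first.
  apply/hasP; exists 1; last by rewrite /small; lia.
  by rewrite mem_filter mem_iota /small; apply/andP; split; lia.
have GC := @G_closed k j k_gt0 (SL n) uSL.
rewrite szSL csSL in GC.
rewrite /= szSL factS in hn.
apply/eqP; rewrite -(eqn_pmul2r (fact_gt0 (n - k))).
apply/eqP.
have -> : count cnd (permutations (Neut n ++ j :: SL n)) * ((n - k) * (n - k).+1) * (n - k)`!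
  = (n - k) * (count cnd (permutations (Neut n ++ j :: SL n)) * ((n - k).+1 * (n - k)`!)).
  nia.
rewrite hn mulnCA GC; lia.
Qed.

Lemma zero_count n : j <= k -> count cnd (permutations (iota 1 n)) = 0.
Proof.
move=> hj; apply/eqP; rewrite -leqn0 leqNgt -has_count; apply/hasPn => t.
rewrite mem_permutations => pt; rewrite /B2.cnd (perm_has _ pt).
apply/negP => /and3P [_ _ /hasP [v]]; rewrite mem_iota /B2.small; lia.
Qed.

End Top.

End B3.
Import B3.

Module C.


Lemma word_perm n (w : 'S_n) : perm_eq (word w) (iota 1 n).
Proof.
rewrite /word -[1]/(1 + 0) iotaDl.
have -> : [seq (w i).+1 | i <- enum 'I_n] = map (addn 1) (map val (map w (enum 'I_n))).
  by rewrite -!map_comp.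
apply: perm_map; rewrite -val_enum_ord; apply: perm_map.
apply: uniq_perm; [by rewrite map_inj_uniq ?enum_uniq //; apply: perm_inj | exact: enum_uniq |].
move=> i; rewrite mem_enum; apply/mapP; exists ((w^-1)%g i); first by rewrite mem_enum.
by rewrite permKV.
Qed.

Lemma word_inj n : injective (@word n).
Proof.
move=> w1 w2 /eq_in_map h; apply/permP => i.
by apply/val_inj; apply: succn_inj; apply: h; rewrite mem_enum.
Qed.

Lemma card_word (P : pred (seq nat)) n :
  #|[set w : 'S_n | P (word w)]| = count P (permutations (iota 1 n)).
Proof.
have u1 : uniq (map (@word n) (enum 'S_n)) by rewrite map_inj_uniq ?enum_uniq //; apply: word_inj.
have sub : {subset map (@word n) (enum 'S_n) <= permutations (iota 1 n)}.
  by move=> t /mapP [w _ ->]; rewrite mem_permutations word_perm.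
have sz : size (permutations (iota 1 n)) <= size (map (@word n) (enum 'S_n)).
  by rewrite size_permutations ?iota_uniq // size_iota size_map -cardE card_Sn.
have [_ eqm] := uniq_min_size u1 sub sz.
have pe : perm_eq (map (@word n) (enum 'S_n)) (permutations (iota 1 n)).
  by apply: uniq_perm => //; exact: permutations_uniq.
rewrite -(seq.permP pe) count_map cardsE cardE size_filter.
by rewrite enumT; apply: eq_count.
Qed.


End C.
Import C.

Module A.

Lemma first_after (a x : nat) (q : pred nat) : a < x -> q x ->
  exists r, [/\ a < r, r <= x, q r & forall z, a < z < r -> ~~ q z].
Proof.
move=> ax qx.
have ex : exists r, (a < r) && q r by exists x; rewrite ax qx.
case: (ex_minnP ex) => r /andP [ar qr] mn.
exists r; split => //; first by apply: mn; rewrite ax qx.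
move=> z /andP [az zr]; apply/negP => qz.
have := mn z; rewrite az qz => /(_ isT); lia.
Qed.

Lemma last_before (x b : nat) (q : pred nat) : x < b -> q x ->
  exists l, [/\ x <= l, l < b, q l & forall z, l < z < b -> ~~ q z].
Proof.
move=> xb qx.
have ex : exists l, (l < b) && q l by exists x; rewrite xb qx.
have bd : forall l, (l < b) && q l -> l <= b by move=> l /andP [h _]; lia.
case: (ex_maxnP ex bd) => l /andP [lb ql] mx.
exists l; split => //; first by apply: mx; rewrite xb qx.
move=> z /andP [lz zb]; apply/negP => qz.
have := mx z; rewrite zb qz => /(_ isT); lia.
Qed.

Section Char.
Variables (k j : nat) (s : seq nat).
Hypotheses (k_gt0 : 0 < k) (us : uniq s) (js : j \in s).
Local Notation w i := (nth 0 s i).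
Local Notation n := (size s).
Local Notation P := (index j s).

Lemma hP : P < n. Proof. by rewrite index_mem. Qed.
Lemma wP : w P = j. Proof. by rewrite nth_index. Qed.
Lemma wj x : x < n -> w x = j -> x = P.
Proof. by move=> xn <-; rewrite index_uniq. Qed.

Definition minP p i q := forall x, i <= x <= q -> w p <= w x.
Definition maxP p i q := forall x, i <= x <= q -> w x <= w p.
Definition downP a b := exists x y, [/\ a <= x, x < y, y <= b, y < n & w y + k <= w x].
Definition upP a b := exists x y, [/\ a <= x, x < y, y <= b, y < n & w x + k <= w y].

Lemma minE p i q : is_min_of s p i q <-> minP p i q.
Proof.
split.
  by move=> /allP h x hx; apply: h; rewrite mem_index_iota; lia.
by move=> h; apply/allP => x; rewrite mem_index_iota => hx; apply: h; lia.
Qed.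

Lemma maxE p i q : is_max_of s p i q <-> maxP p i q.
Proof.
split.
  by move=> /allP h x hx; apply: h; rewrite mem_index_iota; lia.
by move=> h; apply/allP => x; rewrite mem_index_iota => hx; apply: h; lia.
Qed.

Lemma downE a b : kdown_in k s a b <-> downP a b.
Proof.
split.
  move=> /existsP [x /existsP [y /and4P [h1 h2 h3 h4]]].
  by exists x, y; split.
move=> [x [y [h1 h2 h3 h4 h5]]].
have xn : x < n by lia.
apply/existsP; exists (Ordinal xn).
by apply/existsP; exists (Ordinal h4); apply/and4P; split.
Qed.

Lemma upE a b : kup_in k s a b <-> upP a b.
Proof.
split.
  move=> /existsP [x /existsP [y /and4P [h1 h2 h3 h4]]].
  by exists x, y; split.
move=> [x [y [h1 h2 h3 h4 h5]]].
have xn : x < n by lia.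
apply/existsP; exists (Ordinal xn).
by apply/existsP; exists (Ordinal h4); apply/and4P; split.
Qed.

Lemma ascE i q : kascending k s i q <->
  [/\ i < q, q < n, minP i i q, maxP q i q & w i + k <= w q /\ ~ downP i q].
Proof.
split.
  case/and5P => h1 h2 /minE h3 /maxE h4 /andP [h5 h6].
  by split => //; split => // /downE; apply/negP.
case=> h1 h2 h3 h4 [h5 h6]; apply/and5P; split => //; first exact/minE.
  exact/maxE.
by rewrite h5 /=; apply/negP => /downE.
Qed.

Lemma descE i q : kdescending k s i q <->
  [/\ i < q, q < n, maxP i i q, minP q i q & w q + k <= w i /\ ~ upP i q].
Proof.
split.
  case/and5P => h1 h2 /maxE h3 /minE h4 /andP [h5 h6].
  by split => //; split => // /upE; apply/negP.
case=> h1 h2 h3 h4 [h5 h6]; apply/and5P; split => //; first exact/maxE.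
  exact/minE.
by rewrite h5 /=; apply/negP => /upE.
Qed.

Definition leftP := forall x, x < P -> j < w x -> exists y, x < y < P /\ w y + k <= j.
Definition rightP := forall x, P < x < n -> j < w x -> exists y, P < y < x /\ w y + k <= j.
Definition smallP := exists y, y < n /\ w y + k <= j.

Lemma nosmall_between a b :
  ~~ [exists y : 'I_n, (a < y < b) && (w y + k <= j)] ->
  forall z, a < z < b -> z < n -> j < w z + k.
Proof.
move=> /existsPn H z hz zn; have := H (Ordinal zn); rewrite /= hz /=; lia.
Qed.

Lemma get_between a b :
  [exists y : 'I_n, (a < y < b) && (w y + k <= j)] ->
  exists y, a < y < b /\ w y + k <= j.
Proof. by move=> /existsP [y /andP [h1 h2]]; exists y. Qed.

Lemma from_asc (i : 'I_n) : max_kascending k s i P -> [/\ leftP, rightP & smallP].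
Proof.
case/andP => /ascE [iP Pn mi ma [wk nd]] hM.
have wPj := wP; rewrite wPj in wk.
split.
- move=> x xP lx; case: (leqP i x) => ix.
    have := ma x; rewrite wPj; lia.
  by exists i; split => //; lia.
- move=> x /andP [Px xn] lx.
  case: (boolP [exists y : 'I_n, (P < y < x) && (w y + k <= j)]); first exact: get_between.
  move=> /nosmall_between ns.
  have [r [Pr rx lr nl]] := first_after (q := fun r => j < w r) Px lx.
  have rn : r < n by lia.
  have mid : forall z, P < z < r -> w z <= j /\ j < w z + k.
    move=> z hz; have := nl z hz; rewrite -leqNgt => h; split => //.
    by apply: ns; lia.
  exfalso; move/negP: hM; apply; apply/existsP; exists i; apply/existsP; exists (Ordinal rn).
  rewrite leqnn /= (ltnW Pr) /= xpair_eqE eqxx /=; apply/andP; split; first lia.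
  apply/ascE; split => //; first lia.
  + move=> z hz; case: (leqP z P) => zP; first by apply: mi; lia.
    case: (ltnP z r) => zr; first by have := mid z; lia.
    have -> : z = r by lia.
    have := ma i; rewrite wPj; lia.
  + move=> z hz; case: (leqP z P) => zP; first by have := ma z; rewrite wPj; lia.
    case: (ltnP z r) => zr; first by have := mid z; lia.
    have -> : z = r by lia. done.
  + split; first lia.
    move=> [x' [y' [h1 h2 h3 h4 h5]]].
    have wx : w x' <= j.
      case: (leqP x' P) => xP'; first by have := ma x'; rewrite wPj; lia.
      by have := mid x'; lia.
    case: (leqP y' P) => yP.
      by apply: nd; exists x', y'; split.
    case: (ltnP y' r) => yr; first by have := mid y'; lia.
    have ey : y' = r by lia.
    by rewrite ey in h5; lia.
- by exists i; split.
Qed.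

Lemma from_desc (q : 'I_n) : max_kdescending k s P q -> [/\ leftP, rightP & smallP].
Proof.
case/andP => /descE [Pq qn ma mi [wk nu]] hM.
have wPj := wP; rewrite wPj in wk.
split.
- move=> x xP lx.
  case: (boolP [exists y : 'I_n, (x < y < P) && (w y + k <= j)]); first exact: get_between.
  move=> /nosmall_between ns.
  have [l [xl lP ll nl]] := last_before (q := fun r => j < w r) xP lx.
  have ln : l < n by lia.
  have mid : forall z, l < z < P -> w z <= j /\ j < w z + k.
    move=> z hz; have := nl z hz; rewrite -leqNgt => h; split => //.
    by apply: ns; lia.
  exfalso; move/negP: hM; apply; apply/existsP; exists (Ordinal ln); apply/existsP; exists q.
  rewrite leqnn /= (ltnW lP) /= xpair_eqE eqxx andbT /=; apply/andP; split.
    by apply/negP => /eqP; lia.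
  apply/descE; split => //; first lia.
  + move=> z hz; case: (ltnP z P) => zP.
      case: (leqP z l) => zl; first by have -> : z = l by lia.
      by have := mid z; lia.
    have := ma z; rewrite wPj; lia.
  + move=> z hz; case: (ltnP z P) => zP; last by apply: mi; lia.
    case: (leqP z l) => zl; first by (have -> : z = l by lia); lia.
    by have := mid z; lia.
  + split; first lia.
    move=> [x' [y' [h1 h2 h3 h4 h5]]].
    have wy : w y' <= j.
      case: (ltnP y' P) => yP'; last by have := ma y'; rewrite wPj; lia.
      by have := mid y'; lia.
    case: (leqP P x') => xP'.
      by apply: nu; exists x', y'; split.
    case: (leqP x' l) => xl'; first by (have ex : x' = l by lia); rewrite ex in h5; lia.
    by have := mid x'; lia.
- move=> x /andP [Px xn] lx; case: (leqP x q) => xq.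
    by have := ma x; rewrite wPj; lia.
  by exists q; split => //; lia.
- by exists q; split.
Qed.

Lemma to_peak : leftP -> rightP -> smallP -> kpeak_pos k s P.
Proof.
move=> hl hr [y [yn sy]].
have wPj := wP; have Pn := hP.
case: (ltngtP y P) => yP; last by rewrite yP wPj in sy; lia.
- have [l [yl lP sl nl]] := last_before (q := fun z => w z + k <= j) yP sy.
  have mid : forall z, l < z < P -> w z <= j /\ j < w z + k.
    move=> z hz; have := nl z hz; rewrite -ltnNge => h; split => //.
    rewrite leqNgt; apply/negP => lz.
    have hcnd : z < P by lia.
    have [y' [hy' sy']] := hl z hcnd lz.
    by have := nl y'; rewrite sy'; lia.
  have al : kascending k s l P.
    apply/ascE; split => //.
    + move=> z hz; case: (leqP z l) => zl; first by have -> : z = l by lia.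
      case: (ltnP z P) => zP; first by have := mid z; lia.
      by (have -> : z = P by lia); rewrite wPj; lia.
    + move=> z hz; rewrite wPj; case: (leqP z l) => zl; first by (have -> : z = l by lia); lia.
      case: (ltnP z P) => zP; first by have := mid z; lia.
      by (have -> : z = P by lia); rewrite wPj.
    + split; first by rewrite wPj.
      move=> [x' [y' [h1 h2 h3 h4 h5]]].
      have wx : w x' <= j.
        case: (leqP x' l) => xl; first by (have -> : x' = l by lia); lia.
        by have := mid x'; lia.
      case: (ltnP y' P) => yP'; first by have := mid y'; lia.
      have ey : y' = P by lia.
      by rewrite ey wPj in h5; lia.
  have ex : exists i0, kascending k s i0 P by exists l.
  case: (ex_minnP ex) => i0 a0 mn.
  have [i0P _ _ _ _] := (ascE _ _).1 a0.
  have i0n : i0 < n by lia.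
  apply/orP; left; apply/existsP; exists (Ordinal i0n); apply/andP; split => //.
  apply/existsPn => i'; apply/existsPn => q'; apply/negP => /and4P [h1 h2 h3 h4].
  rewrite /= in h1 h2.
  have [i'q' q'n mi' ma' [wk' nd']] := (ascE _ _).1 h4.
  case: (eqVneq (q' : nat) P) => eq'.
    rewrite eq' in h4; have := mn _ h4 => h.
    by move/negP: h3; apply; rewrite xpair_eqE; apply/andP; split; apply/eqP; move: h1 => /=; lia.
  have lq : j < w q'.
    have hcnd : i' <= P <= q' by lia.
    have := ma' P hcnd; rewrite wPj => h.
    rewrite ltn_neqAle h andbT; apply/negP => /eqP e.
    by move: eq'; rewrite (wj q'n (esym e)) eqxx.
  have hcnd : P < q' < n by lia.
  have [y' [hy' sy']] := hr q' hcnd lq.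
  by apply: nd'; exists P, y'; split; rewrite ?wPj //; lia.
- have [r [Pr ry sr nl]] := first_after (q := fun z => w z + k <= j) yP sy.
  have rn : r < n by lia.
  have mid : forall z, P < z < r -> w z <= j /\ j < w z + k.
    move=> z hz; have := nl z hz; rewrite -ltnNge => h; split => //.
    rewrite leqNgt; apply/negP => lz.
    have hcnd : P < z < n by lia.
    have [y' [hy' sy']] := hr z hcnd lz.
    by have := nl y'; rewrite sy'; lia.
  have dr : kdescending k s P r.
    apply/descE; split => //.
    + move=> z hz; rewrite wPj; case: (leqP z P) => zl; first by (have -> : z = P by lia); rewrite wPj.
      case: (ltnP z r) => zr; first by have := mid z; lia.
      by (have -> : z = r by lia); lia.
    + move=> z hz; case: (leqP z P) => zl; first by (have -> : z = P by lia); rewrite wPj; lia.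
      case: (ltnP z r) => zr; first by have := mid z; lia.
      by have -> : z = r by lia.
    + split; first by rewrite wPj.
      move=> [x' [y' [h1 h2 h3 h4 h5]]].
      have wy : w y' <= j.
        case: (ltnP y' r) => yr; first by have := mid y'; lia.
        by (have -> : y' = r by lia); lia.
      case: (leqP x' P) => xP; first by (have ex : x' = P by lia); rewrite ex wPj in h5; lia.
      by have := mid x'; lia.
  have ex : exists q0, kdescending k s P q0 by exists r.
  have bd : forall q0, kdescending k s P q0 -> q0 <= n.
    by move=> q0 /descE [_ h _ _ _]; lia.
  case: (ex_maxnP ex bd) => q0 d0 mx.
  have [Pq0 q0n _ _ _] := (descE _ _).1 d0.
  apply/orP; right; apply/existsP; exists (Ordinal q0n); apply/andP; split => //.
  apply/existsPn => i'; apply/existsPn => q'; apply/negP => /and4P [h1 h2 h3 h4].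
  rewrite /= in h1 h2.
  have [i'q' q'n ma' mi' [wk' nu']] := (descE _ _).1 h4.
  case: (eqVneq (i' : nat) P) => eq'.
    rewrite eq' in h4; have := mx _ h4 => h.
    by move: h3; rewrite /= eq' xpair_eqE eqxx /=; apply/negP/negPn/eqP; lia.
  have i'n : i' < n by lia.
  have lq : j < w i'.
    have hcnd : i' <= P <= q' by lia.
    have := ma' P hcnd; rewrite wPj => h.
    rewrite ltn_neqAle h andbT; apply/negP => /eqP e.
    by move: eq'; rewrite (wj i'n (esym e)) eqxx.
  have hcnd : i' < P by lia.
  have [y' [hy' sy']] := hl i' hcnd lq.
  by apply: nu'; exists y', P; split; rewrite ?wPj //; lia.
Qed.

Lemma peak_iff : kpeak_value k s j <-> [/\ leftP, rightP & smallP].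
Proof.
split.
  move=> /existsP [p /andP [/eqP wp hp]].
  have ep : (p : nat) = P by apply: wj.
  move: hp; rewrite /kpeak_pos ep => /orP [/existsP [i hi] | /existsP [q hq]].
    exact: from_asc hi.
  exact: from_desc hq.
move=> [hl hr hs]; apply/existsP; exists (Ordinal hP); rewrite /= wP eqxx /=.
exact: to_peak.
Qed.

End Char.

End A.
Import A.

Module D.

Section Bridge.
Variables (k j : nat).

Lemma okR_iff L : okR k j L <->
  (forall x, x < size L -> j < nth 0 L x -> exists y, y < x /\ nth 0 L y + k <= j).
Proof.
elim: L => [|a L IH] /=; first by split => // _ x.
rewrite /B2.small /B2.large.
case: (leqP (a + k) j) => sa.
  split => // _ [|x] /= xs lx; first lia.
  by exists 0; split.
case: (ltnP j a) => la.
  split => // h; have [y [hy _]] := h 0 isT la; lia.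
rewrite IH; split.
  move=> h [|x] /= xs lx; first lia.
  have [y [hy sy]] := h x xs lx.
  by exists y.+1; split.
move=> h x xs lx.
have [[|y] [hy sy]] := h x.+1 xs lx; first by move: sy => /=; lia.
by exists y; split.
Qed.

Variable s : seq nat.
Hypotheses (k_gt0 : 0 < k) (us : uniq s) (js : j \in s).
Local Notation w i := (nth 0 s i).
Local Notation n := (size s).
Local Notation P := (index j s).

Lemma cnd_iff : cnd k j s <-> [/\ leftP k j s, rightP k j s & smallP k j s].
Proof.
have Pn : P < n by rewrite index_mem.
have szt : size (take P s) = P by rewrite size_takel // ltnW.
rewrite /cnd; split.
  case/and3P => /okR_iff hl /okR_iff hr /(has_nthP 0) [y yn sy].
  split; last by exists y.
  - move=> x xP lx.
    have h1 : P - x.+1 < size (rev (take P s)) by rewrite size_rev szt; lia.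
    have := hl _ h1; rewrite nth_rev ?szt; last lia.
    rewrite nth_take; last lia.
    have -> : P - (P - x.+1).+1 = x by lia.
    move=> /(_ lx) [y' [hy' sy']].
    rewrite nth_rev ?szt in sy'; last lia.
    rewrite nth_take in sy'; last lia.
    by exists (P - y'.+1); split => //; lia.
  - move=> x /andP [Px xn] lx.
    have h1 : x - P.+1 < size (drop P.+1 s) by rewrite size_drop; lia.
    have := hr _ h1; rewrite nth_drop.
    have -> : P.+1 + (x - P.+1) = x by lia.
    move=> /(_ lx) [y' [hy' sy']]; rewrite nth_drop in sy'.
    by exists (P.+1 + y'); split => //; lia.
move=> [hl hr [y [yn sy]]]; apply/and3P; split.
- apply/okR_iff => x; rewrite size_rev szt => xP.
  rewrite nth_rev ?szt // nth_take; last lia.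
  move=> /hl-/(_ (_ : P - x.+1 < P)) H.
  have [y' [hy' sy']] := H (ltac:(lia)).
  exists (P - y'.+1); split; first lia.
  rewrite nth_rev ?szt; last lia.
  rewrite nth_take; last lia.
  by have -> : P - (P - y'.+1).+1 = y' by lia.
- apply/okR_iff => x; rewrite size_drop => xs; rewrite nth_drop => lx.
  have hx : P < P.+1 + x < n by lia.
  have [y' [hy' sy']] := hr _ hx lx.
  exists (y' - P.+1); split; first lia.
  by rewrite nth_drop; have -> : P.+1 + (y' - P.+1) = y' by lia.
- by apply/(has_nthP 0); exists y.
Qed.

Lemma char : kpeak_value k s j = cnd k j s.
Proof.
apply/idP/idP.
  by move=> /(peak_iff k_gt0 us js) h; apply/cnd_iff.
by move=> /cnd_iff h; apply/(peak_iff k_gt0 us js).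
Qed.

End Bridge.

End D.
Import D.

Theorem proposition3p3 (n j k : nat) :
  2 <= n -> 1 <= j <= n -> 1 <= k <= n - 1 ->
  p_peak n k j =
    (if j <= k then 0%R
     else (((j - k) * (j - k + 1))%:R / ((n - k) * (n - k + 1))%:R)%R).
Proof.
move=> hn hj hk.
have k_gt0 : 0 < k by lia.
rewrite /p_peak card_Sn (card_word (fun t => kpeak_value k t j)).
have e : count (fun t => kpeak_value k t j) (permutations (iota 1 n)) =
         count (cnd k j) (permutations (iota 1 n)).
  apply: eq_in_count => t; rewrite mem_permutations => pt; apply: char => //.
    by rewrite (perm_uniq pt) iota_uniq.
  by rewrite (perm_mem pt) mem_iota; lia.
rewrite e; case: ifP => hjk.
  by rewrite zero_count // GRing.mul0r.
have hm := @main_count k j k_gt0 n (ltac:(lia)).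
apply/eqP; rewrite GRing.eqr_div; last 2 first.
- by rewrite Num.Theory.pnatr_eq0 -lt0n fact_gt0.
- by rewrite Num.Theory.pnatr_eq0 muln_eq0 negb_or; apply/andP; split; apply/negP => /eqP; lia.
rewrite -!GRing.natrM Num.Theory.eqr_nat; apply/eqP.
rewrite !addn1 hm; lia.
Qed.
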